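(* Let $\alpha$ be a Young tableau with $k$ boxes and $r$ rows and $x_1,\dots,x_r\in\mathcal{H}$. Then $\pi^\alpha(x_{\alpha(1)}\otimes\cdots\otimes x_{\alpha(k)})\neq0$ if and only if $x_1\wedge\cdots\wedge x_r\ne0$ (i.e. $x_1,\dots,x_r$ are linearly independent), and in that case the projective class of $\pi^\alpha(x_{\alpha(1)}\otimes\cdots\otimes x_{\alpha(k)})$ depends only on the projective classes of $x_1,\dots,x_r$.
   Context: $\mathcal{H}$ is a finite-dimensional complex Hilbert space. Young tableau $\alpha$: a partition $k=\lambda_1+\cdots+\lambda_r$, $\lambda_1\ge\cdots\ge\lambda_r\ge1$, drawn as left-aligned rows of $\lambda_i$ boxes, boxes numbered bijectively by $1,\dots,k$; $\alpha(i)$ is the row index of the box numbered $i$. $S_k$ acts on $\mathcal{H}^{\otimes k}$ by permuting factors, $\sigma(y_1\otimes\cdots\otimes y_k)=y_{\sigma(1)}\otimes\cdots\otimes y_{\sigma(k)}$. $P_\alpha$, $Q_\alpha$ are the row- and column-preserving subgroups; $c_\alpha=\big(\sum_{\tau\in Q_\alpha}(-1)^\tau\tau\big)\circ\big(\sum_{\sigma\in P_\alpha}\sigma\big)$, and $\pi^\alpha=c_\alpha/\mu(\alpha)$ with $\mu(\alpha)\neq0$ the rational number such that $c_\alpha^2=\mu(\alpha)c_\alpha$. *)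

(* Defs.v *)
From HB Require Import structures.
From mathcomp Require Import all_boot all_order all_algebra all_fingroup.
Set Implicit Arguments. Unset Strict Implicit. Unset Printing Implicit Defensive.
Import Order.TTheory GRing.Theory Num.Theory.
Local Open Scope ring_scope.

(* H = 'rV[C]_n (finite-dim complex space, C any algebraically closed
   numeric field, e.g. the complex numbers).  H^{(x)k} is represented by
   coordinates in the standard product basis: a tensor is a function on
   multi-indices f : 'I_k -> 'I_n. *)
Notation tensor C n k := {ffun {ffun 'I_k -> 'I_n} -> C^o}.

Definition ptensor (C : numClosedFieldType) (n k : nat)
  (y : 'I_k -> 'rV[C]_n) : tensor C n k :=
  [ffun f : {ffun 'I_k -> 'I_n} => \prod_(i < k) y i 0 (f i)].

(* the action  s(y_1 (x)...(x) y_k) = y_{s 1} (x) ... (x) y_{s k},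
   extended linearly: (s T)(f) = T(f o s^-1). *)
Definition permT (C : numClosedFieldType) (n k : nat) (s : {perm 'I_k})
  (t : tensor C n k) : tensor C n k :=
  [ffun f : {ffun 'I_k -> 'I_n} => t [ffun i : 'I_k => f ((s^-1)%g i)]].

(* Young tableau with k boxes and r rows: shape lam (lam_0 >= ... >= lam_{r-1} >= 1),
   box numbered i sits in row (row i) and column (col i); the numbering is a
   bijection between 'I_k and the boxes {(a,b) | b < lam a}. *)
Definition is_tableau (k r : nat) (lam : 'I_r -> nat)
  (row : 'I_k -> 'I_r) (col : 'I_k -> nat) : Prop :=
  [/\ forall a b : 'I_r, (a <= b)%N -> (lam b <= lam a)%N,
      forall a : 'I_r, (0 < lam a)%N,
      forall i j : 'I_k, row i = row j -> col i = col j -> i = j,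
      forall i : 'I_k, (col i < lam (row i))%N
    & forall (a : 'I_r) (b : nat), (b < lam a)%N ->
        exists i : 'I_k, row i = a /\ col i = b].

Definition rowpres (k r : nat) (row : 'I_k -> 'I_r) (s : {perm 'I_k}) : bool :=
  [forall i, row (s i) == row i].
Definition colpres (k : nat) (col : 'I_k -> nat) (s : {perm 'I_k}) : bool :=
  [forall i, col (s i) == col i].

Definition sgnp (C : numClosedFieldType) (k : nat) (s : {perm 'I_k}) : C :=
  (-1) ^+ odd_perm s.

Definition young_c (C : numClosedFieldType) (n k r : nat)
  (row : 'I_k -> 'I_r) (col : 'I_k -> nat) (t : tensor C n k) : tensor C n k :=
  \sum_(tau : {perm 'I_k} | colpres col tau)
     sgnp C tau *: permT tau (\sum_(sig : {perm 'I_k} | rowpres row sig) permT sig t).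

(* c_alpha as an element of the group algebra C[S_k] (a function S_k -> C).
   With MathComp's product (s * t = "s then t"), permT (tau * sig) = permT tau o permT sig,
   so the group-algebra product matching operator composition is tau * sig. *)
Definition young_c_ga (C : numClosedFieldType) (k r : nat)
  (row : 'I_k -> 'I_r) (col : 'I_k -> nat) (g : {perm 'I_k}) : C :=
  \sum_(tau : {perm 'I_k} | colpres col tau)
    \sum_(sig : {perm 'I_k} | rowpres row sig)
       (if (tau * sig)%g == g then sgnp C tau else 0).

Definition ga_mul (C : numClosedFieldType) (k : nat) (a b : {perm 'I_k} -> C)
  (g : {perm 'I_k}) : C :=
  \sum_(g1 : {perm 'I_k}) \sum_(g2 : {perm 'I_k} | (g1 * g2)%g == g) a g1 * b g2.

Definition is_young_mu (C : numClosedFieldType) (k r : nat)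
  (row : 'I_k -> 'I_r) (col : 'I_k -> nat) (mu : C) : Prop :=
  mu != 0 /\
  forall g, ga_mul (young_c_ga C row col) (young_c_ga C row col) g
            = mu * young_c_ga C row col g.

Definition young_pi (C : numClosedFieldType) (n k r : nat)
  (row : 'I_k -> 'I_r) (col : 'I_k -> nat) (mu : C) (t : tensor C n k) : tensor C n k :=
  mu^-1 *: young_c row col t.

(* Main.v *)
Require Import Defs.
From HB Require Import structures.
From mathcomp Require Import all_boot all_order all_algebra all_fingroup.
From Stdlib Require Import Classical.
Import GRing.Theory Num.Theory.
Set Implicit Arguments. Unset Strict Implicit.
Local Open Scope ring_scope.

Lemma ptensor_ext (C : numClosedFieldType) (n k : nat) (y z : 'I_k -> 'rV[C]_n) :
  y =1 z -> ptensor y = ptensor z.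
Proof. by move=> e; apply/ffunP=> f; rewrite !ffunE; apply: eq_bigr => i _; rewrite e. Qed.

Lemma permT_ptensor (C : numClosedFieldType) (n k : nat) (s : {perm 'I_k}) (y : 'I_k -> 'rV[C]_n) :
  permT s (ptensor y) = ptensor (fun i => y (s i)).
Proof.
apply/ffunP=> f; rewrite !ffunE (reindex_inj (@perm_inj _ s)) /=.
by apply: eq_bigr => i _; rewrite ffunE permK.
Qed.

Lemma permTZ (C : numClosedFieldType) (n k : nat) (s : {perm 'I_k}) (a : C) (t : tensor C n k) :
  permT s (a *: t) = a *: permT s t.
Proof. by apply/ffunP=> f; rewrite !ffunE. Qed.

Definition AP (C : numClosedFieldType) (n k : nat) (col : 'I_k -> nat) (z : 'I_k -> 'rV[C]_n) : tensor C n k :=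
  \sum_(tau : {perm 'I_k} | colpres col tau) sgnp C tau *: ptensor (fun i => z (tau i)).

Lemma young_c_AP (C : numClosedFieldType) (n k r : nat) (row : 'I_k -> 'I_r) (col : 'I_k -> nat)
   (x : 'I_r -> 'rV[C]_n) :
  young_c row col (ptensor (fun i => x (row i))) =
   (#|[pred s : {perm 'I_k} | rowpres row s]|)%:R *: AP col (fun i => x (row i)).
Proof.
rewrite /young_c /AP scaler_sumr.
have -> : \sum_(sig : {perm 'I_k} | rowpres row sig) permT sig (ptensor (fun i => x (row i)))
   = \sum_(sig : {perm 'I_k} | rowpres row sig) ptensor (fun i => x (row i)).
  apply: eq_bigr => s /forallP hs; rewrite permT_ptensor; apply: ptensor_ext => i.
  by rewrite (eqP (hs i)).
rewrite sumr_const -scaler_nat.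
apply: eq_bigr => tau _; rewrite permTZ permT_ptensor !scalerA mulrC.
done.
Qed.

Lemma AP_neq0 (C : numClosedFieldType) (n k r : nat) (row : 'I_k -> 'I_r) (col : 'I_k -> nat)
   (x : 'I_r -> 'rV[C]_n) (U : 'I_n -> 'I_r -> C) :
  (forall i j : 'I_k, row i = row j -> col i = col j -> i = j) ->
  (forall b a, \sum_m x b 0 m * U m a = (b == a)%:R) ->
  AP col (fun i => x (row i)) != 0.
Proof.
move=> inj hU.
pose Phi (t : tensor C n k) := \sum_(f : {ffun 'I_k -> 'I_n}) t f * \prod_j U (f j) (row j).
have Phi0 : Phi 0 = 0 by rewrite /Phi big1 // => f _; rewrite ffunE mul0r.
suff : Phi (AP col (fun i => x (row i))) = 1.
  by move=> h; apply/eqP => e; move: h; rewrite e Phi0 => /eqP; rewrite eq_sym oner_eq0.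
have Ppt : forall tau : {perm 'I_k}, Phi (ptensor (fun i => x (row (tau i)))) = (rowpres row tau)%:R.
  move=> tau; rewrite /Phi.
  transitivity (\prod_(j : 'I_k) \sum_(m : 'I_n) x (row (tau j)) 0 m * U m (row j)).
    rewrite bigA_distr_bigA; apply: eq_bigr => f _; rewrite ffunE -big_split /=.
    done.
  under eq_bigr => j _ do rewrite hU.
  case: (boolP (rowpres row tau)) => [/forallP h|/forallPn [j hj]].
    by rewrite big1 // => j _; rewrite h.
  by rewrite (bigD1 j) //= (negPf hj) mul0r.
rewrite /AP /Phi.
under eq_bigr => f _ do rewrite sum_ffunE mulr_suml.
rewrite exchange_big /=.
under eq_bigr => tau _.
  under eq_bigr => f _ do rewrite ffunE -mulrA.
  rewrite -mulr_sumr.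
  have := Ppt tau; rewrite /Phi => ->.
  over.
rewrite (bigD1 1%g) /=; last by apply/forallP=> i; rewrite perm1.
have -> : rowpres row (1%g : {perm 'I_k}) by apply/forallP=> i; rewrite perm1.
rewrite big1 ?addr0; last first.
  move=> tau /andP[/forallP hc hne]; case: (boolP (rowpres row tau)) => [/forallP hr|]; last by rewrite mulr0.
  exfalso; move/eqP: hne; apply; apply/permP => i; rewrite perm1.
  by apply: inj; apply/eqP; [apply: hr | apply: hc].
by rewrite /sgnp odd_perm1 expr0 mulr1.
Qed.

Lemma AP_swap (C : numClosedFieldType) (n k : nat) (col : 'I_k -> nat) (z : 'I_k -> 'rV[C]_n)
  (i1 i2 : 'I_k) : i1 != i2 -> col i1 = col i2 -> z i1 = z i2 -> AP col z = 0.
Proof.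
move=> hne hc hz.
set t := tperm i1 i2.
have ht : forall i, col (t i) = col i.
  by move=> i; rewrite /t; case: tpermP => [->|->|]; rewrite ?hc.
have e : AP col z = - AP col z.
  rewrite {1}/AP (reindex_inj (mulIg t)) /= /AP -sumrN.
  have hcp : forall s, colpres col (s * t)%g = colpres col s.
    move=> s; apply/idP/idP => /forallP h; apply/forallP => i.
      by have := h i; rewrite permM ht.
    by rewrite permM ht; apply: h.
  apply: eq_big => [s|s _]; first exact: hcp.
  rewrite /sgnp odd_permM odd_tperm hne signr_addb /= expr1 mulrN1 scaleNr; congr (- (_ *: _)).
  by apply: ptensor_ext => i; rewrite permM /t; case: tpermP => [->|->|].
apply/ffunP => f; move: (congr1 (fun u : tensor C n k => u f) e); rewrite /= !ffunE => e'.
apply/eqP; have := mulrn_eq0 (AP col z f) 2.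
by rewrite mulr2n {2}e' addrN eqxx /= => <-.
Qed.

Lemma AP_lin (C : numClosedFieldType) (n k r : nat) (col : 'I_k -> nat) (z : 'I_k -> 'rV[C]_n)
  (j : 'I_k) (w : 'I_r -> 'rV[C]_n) (kk : 'I_r -> C) :
  \sum_a kk a *: w a = 0 ->
  \sum_a kk a *: AP col (fun i => if i == j then w a else z i) = 0.
Proof.
move=> hw; apply/ffunP => f; rewrite sum_ffunE [RHS]ffunE.
under eq_bigr => a _ do rewrite ffunE /AP sum_ffunE scaler_sumr.
rewrite exchange_big /= big1 // => tau _.
set j' := ((tau^-1)%g j).
have hsplit : forall a, kk a *: (sgnp C tau *: ptensor (fun i => if tau i == j then w a else z (tau i))) f
   = sgnp C tau * (kk a * w a 0 (f j')) * \prod_(i | i != j') z (tau i) 0 (f i).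
  move=> a; rewrite !ffunE (bigD1 j') //= /j' permKV eqxx.
  rewrite (eq_bigr (fun i => z (tau i) 0 (f i))); last first.
    by move=> i hi; rewrite -(inj_eq (@perm_inj _ (tau^-1)%g)) permK (negPf hi).
  by rewrite /GRing.scale /= mulrA [kk a * _]mulrC -!mulrA.
under eq_bigr => a _ do rewrite hsplit.
rewrite -mulr_suml -mulr_sumr.
have -> : \sum_a kk a * w a 0 (f j') = 0.
  transitivity ((\sum_a kk a *: w a) 0 (f j')); last by rewrite hw mxE.
  by rewrite summxE; apply: eq_bigr => a _; rewrite mxE.
by rewrite mulr0 mul0r.
Qed.

Lemma AP_ext (C : numClosedFieldType) (n k : nat) (col : 'I_k -> nat) (z1 z2 : 'I_k -> 'rV[C]_n) :
  z1 =1 z2 -> AP col z1 = AP col z2.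
Proof. by move=> e; apply: eq_bigr => t _; congr (_ *: _); apply: ptensor_ext => i; rewrite e. Qed.

Lemma AP_scale (C : numClosedFieldType) (n k r : nat) (row : 'I_k -> 'I_r) (col : 'I_k -> nat)
  (x y : 'I_r -> 'rV[C]_n) (c : 'I_r -> C) :
  (forall a, y a = c a *: x a) ->
  AP col (fun i => y (row i)) = (\prod_i c (row i)) *: AP col (fun i => x (row i)).
Proof.
move=> hy; rewrite /AP scaler_sumr; apply: eq_bigr => tau _.
rewrite scalerA mulrC -scalerA; congr (_ *: _).
apply/ffunP => f; rewrite !ffunE.
rewrite [\prod_i c (row i)](reindex_inj (@perm_inj _ tau)) /= /GRing.scale /= -big_split /=.
by apply: eq_bigr => i _; rewrite hy mxE.
Qed.

Lemma free_tupleE (C : numClosedFieldType) (n r : nat) (x : 'I_r -> 'rV[C]_n) :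
  free [tuple x a | a < r] <->
  (forall kk : 'I_r -> C, \sum_a kk a *: x a = 0 -> forall a, kk a = 0).
Proof.
have hX : forall i : 'I_r, [tuple x a | a < r]`_i = x i by move=> i; rewrite nth_mktuple.
split.
  move/(@freeP _ _ r [tuple x a | a < r]) => h kk hk; apply: h.
  by rewrite -[RHS]hk; apply: eq_bigr => i _; rewrite hX.
move=> h; apply/(@freeP _ _ r [tuple x a | a < r]) => kk hk; apply: h.
by rewrite -[RHS]hk; apply: eq_bigr => j _; rewrite hX.
Qed.

Theorem mainTheorem3 (C : numClosedFieldType) (n k r : nat)
  (lam : 'I_r -> nat) (row : 'I_k -> 'I_r) (col : 'I_k -> nat) (mu : C) :
  is_tableau lam row col ->
  is_young_mu row col mu ->
  (forall x : 'I_r -> 'rV[C]_n,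
     (young_pi row col mu (ptensor (fun i => x (row i))) != 0)
       <-> free [tuple x a | a < r])
  /\
  (forall x y : 'I_r -> 'rV[C]_n,
     free [tuple x a | a < r] ->
     (forall a, exists c : C, c != 0 /\ y a = c *: x a) ->
     exists l : C, l != 0 /\
       young_pi row col mu (ptensor (fun i => y (row i)))
       = l *: young_pi row col mu (ptensor (fun i => x (row i)))).
Proof.
move=> [_ hlam hinj _ hsurj] [mu0 _].
set N := #|[pred s : {perm 'I_k} | rowpres row s]|.
have hN : (N%:R : C) != 0.
  rewrite pnatr_eq0 -lt0n; apply/card_gt0P; exists 1%g.
  by rewrite inE; apply/forallP => i; rewrite perm1.
have hs : mu^-1 * N%:R != 0 by rewrite mulf_neq0 // invr_eq0.
have ypi : forall x : 'I_r -> 'rV[C]_n, young_pi row col mu (ptensor (fun i => x (row i)))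
   = (mu^-1 * N%:R) *: AP col (fun i => x (row i)).
  by move=> x; rewrite /young_pi young_c_AP scalerA.
split.
  move=> x; rewrite ypi scaler_eq0 (negPf hs) /=; split.
    move=> hAP; apply: contraNT hAP => nfree; apply/negPn/eqP.
    have [kk [hk [b hb]]] : exists kk : 'I_r -> C, \sum_a kk a *: x a = 0 /\ exists b, kk b != 0.
      apply: NNPP => H; move/negP: nfree; apply; apply/free_tupleE => kk hsum i.
      apply/eqP/negPn/negP => hne; apply: H; exists kk; split; last by exists i.
      exact: hsum.
    have [box hbox] : exists box : 'I_r -> 'I_k, forall a, row (box a) = a /\ col (box a) = 0%N.
      apply: (@fin_all_exists _ (fun _ => 'I_k) (fun a i => row i = a /\ col i = 0%N)) => a; exact: (hsurj a 0%N (hlam a)).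
    have := @AP_lin C n k r col (fun i => x (row i)) (box b) x kk hk.
    rewrite (bigD1 b) //= big1 ?addr0; last first.
      move=> a hab; apply/eqP; rewrite scaler_eq0; apply/orP; right; apply/eqP.
      have hne : box a != box b.
        by apply: contraNneq hab => e; rewrite -(proj1 (hbox a)) e (proj1 (hbox b)).
      apply: (AP_swap (i1 := box a) (i2 := box b)) => //.
        by rewrite (proj2 (hbox a)) (proj2 (hbox b)).
      by rewrite eqxx (negPf hne) (proj1 (hbox a)).
    rewrite (AP_ext col (z2 := fun i => x (row i))); last first.
      by move=> i; case: eqP => // ->; rewrite (proj1 (hbox b)).
    by move/eqP; rewrite scaler_eq0 (negPf hb) /= => /eqP ->; rewrite eqxx.
  move=> hfree.
  pose X : 'M[C]_(r, n) := \matrix_a x a.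
  have hX : row_free X.
    apply: inj_row_free => v hv; apply/rowP => a; rewrite mxE.
    move/free_tupleE: hfree => /(_ (fun a => v 0 a)); apply => //.
    rewrite -[RHS]hv mulmx_sum_row; apply: eq_bigr => i _; rewrite rowK //.
  have [B hB] := row_freeP hX.
  apply: (AP_neq0 (U := fun m a => B m a)) => // b a.
  have := congr1 (fun M : 'M[C]_r => M b a) hB; rewrite /= !mxE => <-.
  by apply: eq_bigr => m _; rewrite mxE.
move=> x y _ hy.
have [c hc] := fin_all_exists hy.
exists (\prod_i c (row i)); split.
  by apply/prodf_neq0 => i _; case: (hc (row i)).
rewrite !ypi (@AP_scale C n k r row col x y c); last by move=> a; case: (hc a).
by rewrite !scalerA mulrC.
Qed.
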